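(* Let $X \subseteq \mathrm{VF}^n\times\mathrm{VF}^m$ and $\bar a\in\mathrm{VF}^n$. Let $L_1, L_2 \subseteq \mathrm{VF}^m$ be two minimal limit sets of $X$ at $\bar a$, and let $\overline{L}_1, \overline{L}_2$ be their topological closures. Then $\overline{L}_1 = \overline{L}_2$.
   Context: $\mathrm{VF}$ is an algebraically closed valued field with value group $\Gamma$, valuation $v$, and the valuation topology. For $\bar b\in\mathrm{VF}^k$, $\epsilon\in\Gamma$, $\mathfrak{o}(\bar b,\epsilon)=\{\bar c: v(c_i-b_i)>\epsilon\text{ for all }i\}$. For $X\subseteq \mathrm{VF}^n\times\mathrm{VF}^m$, write $\mathrm{pr}_{\le n}X$ for its projection to $\mathrm{VF}^n$ and $\mathrm{fib}(X,\bar c)=\{\bar d:(\bar c,\bar d)\in X\}$. A set $L\subseteq\mathrm{VF}^m$ is a limit set of $X$ at $\bar a\in\mathrm{VF}^n$ if for every $\epsilon\in\Gamma$ there is $\delta\in\Gamma$ such that whenever $\bar c\in\mathfrak{o}(\bar a,\delta)\cap(\mathrm{pr}_{\le n}X\setminus\{\bar a\})$, we have $\mathrm{fib}(X,\bar c)\subseteq\bigcup_{\bar b\in L'}\mathfrak{o}(\bar b,\epsilon)$ for some $L'\subseteq L$. A limit set $L$ of $X$ at $\bar a$ is minimal if no proper subset of $L$ is a limit set of $X$ at $\bar a$. *)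

(* Defs.v *)
From HB Require Import structures.
From mathcomp Require Import all_boot all_order all_algebra.
From mathcomp Require Import boolp classical_sets.
Set Implicit Arguments. Unset Strict Implicit. Unset Printing Implicit Defensive.
Import Order.TTheory GRing.Theory Num.Theory.
Local Open Scope ring_scope.
Local Open Scope classical_set_scope.

(* Values of a valuation: [None] stands for +infinity = v(0). *)
Section Valued.
Variables (K : fieldType) (G : porderZmodType).

Definition vle (x y : option G) : bool :=
  match x, y with
  | _, None => true
  | None, Some _ => false
  | Some a, Some b => (a <= b)%R
  end.

Definition vmin (x y : option G) : option G := if vle x y then x else y.

Definition vadd (x y : option G) : option G :=
  match x, y with Some a, Some b => Some (a + b) | _, _ => None end.

Definition vgt (x : option G) (eps : G) : bool :=
  match x with None => true | Some a => (eps < a)%R end.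

Record is_valuation (v : K -> option G) : Prop := {
  val_total : forall a b : G, (a <= b)%R || (b <= a)%R;
  val_addmono : forall a b c : G, (a <= b)%R -> (a + c <= b + c)%R;
  val_inf : forall x, v x = None <-> x = 0;
  val_mul : forall x y, v (x * y) = vadd (v x) (v y);
  val_add : forall x y, vle (vmin (v x) (v y)) (v (x + y));
  val_onto : forall g : G, exists x, v x = Some g
}.

Variable v : K -> option G.

Definition vball (k : nat) (b : 'rV[K]_k) (eps : G) : set 'rV[K]_k :=
  [set c | forall i : 'I_k, vgt (v (c ord0 i - b ord0 i)) eps].

Definition pr_le (n m : nat) (X : set ('rV[K]_n * 'rV[K]_m)) : set 'rV[K]_n :=
  [set c | exists d, X (c, d)].

Definition fib (n m : nat) (X : set ('rV[K]_n * 'rV[K]_m)) (c : 'rV[K]_n)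
  : set 'rV[K]_m := [set d | X (c, d)].

Definition is_limit_set (n m : nat) (X : set ('rV[K]_n * 'rV[K]_m))
    (a : 'rV[K]_n) (L : set 'rV[K]_m) : Prop :=
  forall eps : G, exists delta : G, forall c : 'rV[K]_n,
    vball a delta c -> pr_le X c -> c <> a ->
    exists L' : set 'rV[K]_m, L' `<=` L /\
      fib X c `<=` \bigcup_(b in L') vball b eps.

Definition is_minimal_limit_set (n m : nat) (X : set ('rV[K]_n * 'rV[K]_m))
    (a : 'rV[K]_n) (L : set 'rV[K]_m) : Prop :=
  is_limit_set X a L /\
  forall L' : set 'rV[K]_m, L' `<=` L -> L' <> L -> ~ is_limit_set X a L'.

(* Topological closure in the valuation (product) topology on K^k; the balls
   o(x, eps) form a neighbourhood basis of x. *)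
Definition vclosure (k : nat) (L : set 'rV[K]_k) : set 'rV[K]_k :=
  [set x | forall eps : G, exists2 b, L b & vball x eps b].

End Valued.

(* Main.v *)
Require Import Defs.
From HB Require Import structures.
From mathcomp Require Import all_boot all_order all_algebra.
From mathcomp Require Import boolp classical_sets.
From mathcomp Require Import ring.
Local Open Scope ring_scope.
Local Open Scope classical_set_scope.
Import Order.TTheory GRing.Theory Num.Theory.

Section Aux.
Variables (K : closedFieldType) (G : porderZmodType) (v : K -> option G).
Hypothesis hv : is_valuation v.

Lemma vgt_add x y e : vgt (v x) e -> vgt (v y) e -> vgt (v (x + y)) e.
Proof.
have := val_add hv x y; rewrite /vmin.
case: (v (x + y)) => [c|] //; case: (v x) => [p|]; case: (v y) => [q|] //=.
- by case: ifP => /= H1 H2 H3 H4; apply: lt_le_trans H2; [exact: H3|exact: H4].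
- by move=> H1 H2 _; apply: lt_le_trans H1.
- by move=> H1 _ H2; apply: lt_le_trans H1.
Qed.

Lemma vgt_mono (e1 e2 : G) (p : option G) : (e1 <= e2)%R -> vgt p e2 -> vgt p e1.
Proof. by case: p => //= a H1 H2; apply: le_lt_trans H2. Qed.

Lemma v1 : v 1 = Some 0.
Proof.
have := val_mul hv 1 1; rewrite mulr1.
case E: (v 1) => [g|] /=.
  by move=> [] H; congr Some; have := addrK g g; rewrite -H subrr.
by move: E => /(val_inf hv) /eqP; rewrite oner_eq0.
Qed.

Lemma vNone : exists h, v (-1) = Some h /\ h = 0.
Proof.
have := val_mul hv (-1) (-1); rewrite mulrNN mulr1 v1.
case E: (v (-1)) => [h|] //= [Hh]; exists h; split => //.
have T := val_total hv h 0.
case/orP: T => T.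
- have := val_addmono hv h T; rewrite add0r -Hh => T2.
  by apply/eqP; rewrite eq_le T T2.
- have := val_addmono hv h T; rewrite add0r -Hh => T2.
  by apply/eqP; rewrite eq_le T T2.
Qed.

Lemma vN x : v (- x) = v x.
Proof.
have [h [Eh E0]] := vNone; subst h.
rewrite -mulN1r val_mul // Eh; case: (v x) => //= g; by rewrite add0r.
Qed.

End Aux.

Lemma sub_closure (K : closedFieldType) (G : porderZmodType)
  (v : K -> option G) (hv : is_valuation v) (n m : nat)
  (X : set ('rV[K]_n * 'rV[K]_m)) (a : 'rV[K]_n) (L1 L2 : set 'rV[K]_m) :
  is_minimal_limit_set v X a L1 -> is_limit_set v X a L2 ->
  vclosure v L1 `<=` vclosure v L2.
Proof.
move=> [lim1 min1] lim2 x cl1.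
apply: contrapT => ncl2.
have [eps0 H0] : exists eps0, forall b, L2 b -> ~ vball v x eps0 b.
  apply: contrapT => N; apply: ncl2 => eps.
  apply: contrapT => N2; apply: N; exists eps => b L2b vb; apply: N2.
  by exists b.
pose L1' := [set b | L1 b /\ ~ vball v x eps0 b].
apply: (min1 L1').
- by move=> b [].
- move=> E; have [b L1b vb] := cl1 eps0.
  by have := L1b; rewrite -E => -[].
move=> eps.
have [eps1 [le1 le2]] : exists eps1, (eps <= eps1)%R /\ (eps0 <= eps1)%R.
  case/orP: (val_total hv eps eps0) => T.
  - by exists eps0; split.
  - by exists eps; split.
have [d1 Hd1] := lim1 eps1; have [d2 Hd2] := lim2 eps1.
have [delta [ld1 ld2]] : exists delta, (d1 <= delta)%R /\ (d2 <= delta)%R.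
  case/orP: (val_total hv d1 d2) => T.
  - by exists d2; split.
  - by exists d1; split.
exists delta => c vc prc nca.
have [L1'' [s1 c1]] := Hd1 c (fun i => @vgt_mono G _ _ _ ld1 (vc i)) prc nca.
have [L2'' [s2 c2]] := Hd2 c (fun i => @vgt_mono G _ _ _ ld2 (vc i)) prc nca.
exists [set b | L1'' b /\ ~ vball v x eps0 b]; split.
  by move=> b [/s1 ? ?]; split.
move=> d fd.
have [b L1b vb] := c1 d fd.
have [b' L2b vb'] := c2 d fd.
exists b; last by move=> i; apply: (@vgt_mono G _ _ _ le1 (vb i)).
split => // Hb; apply: (H0 b' (s2 _ L2b)) => i.
have -> : b' ord0 i - x ord0 i =
   (- (d ord0 i - b' ord0 i)) + ((d ord0 i - b ord0 i) + (b ord0 i - x ord0 i)).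
  by ring.
apply: (@vgt_add _ _ _ hv); first by rewrite (@vN _ _ _ hv); apply: (@vgt_mono G _ _ _ le2 (vb' i)).
apply: (@vgt_add _ _ _ hv) => //; apply: (@vgt_mono G _ _ _ le2 (vb i)).
Qed.

Theorem lemma3p2 (K : closedFieldType) (G : porderZmodType)
  (v : K -> option G) (hv : is_valuation v) (n m : nat)
  (X : set ('rV[K]_n * 'rV[K]_m)) (a : 'rV[K]_n) (L1 L2 : set 'rV[K]_m) :
  is_minimal_limit_set v X a L1 -> is_minimal_limit_set v X a L2 ->
  vclosure v L1 = vclosure v L2.
Proof.
move=> M1 M2; apply/seteqP; split.
- exact: (@sub_closure _ _ _ hv _ _ _ _ _ _ M1 M2.1).
- exact: (@sub_closure _ _ _ hv _ _ _ _ _ _ M2 M1.1).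
Qed.
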